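(* Let $a,b$ be distinct letters. For every $D\in\{\mathrm{AH}_{\mathrm{ned}},\mathrm{AH}_{\mathrm{ged}},\mathrm{AH}_{\mathrm{ced}}\}$ and all natural numbers $j>i$, we have $D(a^*,(a^jb)^* )<D(a^*,(a^ib)^* )$.
   Context: Words are over a finite alphabet $\Sigma\ni a,b$. An edit path from $x$ to $y$ is a sequence $p=(a_1,b_1)\cdots(a_n,b_n)$ with $(a_i,b_i)\in(\Sigma\cup\{\varepsilon\})^2\setminus\{(\varepsilon,\varepsilon)\}$, $a_1\cdots a_n=x$, $b_1\cdots b_n=y$; $|p|=n$, $\mathrm{wgt}(p)=|\{i:a_i\ne b_i\}|$. $\mathrm{ed}(x,y)=\min_p\mathrm{wgt}(p)$; $\mathrm{ned}(x,y)=\min_p\mathrm{wgt}(p)/|p|$ ($\mathrm{ned}(\varepsilon,\varepsilon)=0$); $\mathrm{ged}(x,y)=\frac{2\mathrm{ed}(x,y)}{|x|+|y|+\mathrm{ed}(x,y)}$ ($0$ if $x=y=\varepsilon$); $\mathrm{ced}(x,y)$ is the minimum, over sequences $x=u_0,\dots,u_k=y$ with $\mathrm{ed}(u_{i-1},u_i)=1$, of $\sum_{i=1}^k1/\max(|u_{i-1}|,|u_i|)$. For a word distance $d$: $\overrightarrow{\mathrm{AH}}_{d}(X,Y)=\lim_{k\to\infty}\sup_{x\in X,|x|\ge k}\inf_{y\in Y}d(x,y)$ and $\mathrm{AH}_d(X,Y)=\max\{\overrightarrow{\mathrm{AH}}_{d}(X,Y),\overrightarrow{\mathrm{AH}}_{d}(Y,X)\}$.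 *)

(* Defs.v *)
From HB Require Import structures.
From mathcomp Require Import all_boot all_order all_algebra.
From mathcomp Require Import all_classical all_reals all_analysis.
Set Implicit Arguments. Unset Strict Implicit. Unset Printing Implicit Defensive.
Import Order.TTheory GRing.Theory Num.Theory.
Local Open Scope classical_set_scope.
Local Open Scope ring_scope.

Section EditDistances.
Variables (R : realType) (S : finType).

Definition word := seq S.
Definition edop := (option S * option S)%type.

Definition valid_op (o : edop) : bool := ~~ ((o.1 == None) && (o.2 == None)).

Definition is_edit_path (x y : word) (p : seq edop) : Prop :=
  [/\ all valid_op p, pmap id (unzip1 p) = x & pmap id (unzip2 p) = y].

Definition wgt (p : seq edop) : nat := count (fun o : edop => o.1 != o.2) p.

Definition trivial_path (x y : word) : seq edop :=
  map (fun c => (Some c, None)) x ++ map (fun c => (None, Some c)) y.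


Lemma ex_edit_wgt (x y : word) :
  exists n, `[< exists p, is_edit_path x y p /\ wgt p = n >].
Proof.
exists (wgt (trivial_path x y)); apply/asboolP; exists (trivial_path x y); split => //.
rewrite /is_edit_path /trivial_path; split.
- by rewrite all_cat; apply/andP; split; apply/allP => o /mapP [c _ ->].
- rewrite /unzip1 map_cat pmap_cat.
  have -> : pmap id [seq o.1 | o <- [seq ((Some c, None) : edop) | c <- x]] = x.
    by elim: x => //= c x ->.
  have -> : pmap id [seq o.1 | o <- [seq ((None, Some c) : edop) | c <- y]] = [::].
    by elim: y.
  by rewrite cats0.
- rewrite /unzip2 map_cat pmap_cat.
  have -> : pmap id [seq o.2 | o <- [seq ((Some c, None) : edop) | c <- x]] = [::].
    by elim: x.
  by elim: y => //= c y ->.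
Qed.

Definition ed (x y : word) : nat := ex_minn (ex_edit_wgt x y).

Definition ned (x y : word) : R :=
  if (x == [::]) && (y == [::]) then 0
  else inf [set ((wgt p)%:R / (size p)%:R : R) | p in is_edit_path x y].

Definition ged (x y : word) : R :=
  if (x == [::]) && (y == [::]) then 0
  else (2 * (ed x y)%:R) / ((size x)%:R + (size y)%:R + (ed x y)%:R).

(* cost of a chain x = u_0, u_1, ..., u_k (s = [u_1;...;u_k]) *)
Definition chain_cost (x : word) (s : seq word) : R :=
  \sum_(uv <- zip (x :: s) s) 1 / (maxn (size uv.1) (size uv.2))%:R.

Definition is_chain (x y : word) (s : seq word) : bool :=
  path (fun u v => ed u v == 1%N) x s && (last x s == y).

Definition ced (x y : word) : R :=
  inf [set chain_cost x s | s in [set s | is_chain x y s]].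

Local Open Scope ereal_scope.

Definition AH_dir (d : word -> word -> R) (X Y : set word) : \bar R :=
  limn (fun k : nat =>
    ereal_sup [set ereal_inf [set (d x y)%:E | y in Y]
              | x in [set x | X x /\ (k <= size x)%N]]).

Definition AH (d : word -> word -> R) (X Y : set word) : \bar R :=
  maxe (AH_dir d X Y) (AH_dir d Y X).

End EditDistances.

Definition kstar (S : finType) (w : seq S) : set (seq S) :=
  [set u | exists n : nat, u = flatten (nseq n w)].

(* Main.v *)
Require Import Defs.
From HB Require Import structures.
From mathcomp Require Import all_boot all_order all_algebra.
From mathcomp Require Import all_classical all_reals all_analysis.
From mathcomp Require Import zify ring lra.
Set Implicit Arguments. Unset Strict Implicit. Unset Printing Implicit Defensive.
Import Order.TTheory GRing.Theory Num.Theory.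

Module Part1.
Local Open Scope classical_set_scope.
Local Open Scope ring_scope.

Section AHlemmas.
Variables (R : realType) (S : finType).
Local Open Scope ereal_scope.

Let useq (d : word S -> word S -> R) (X Y : set (word S)) (k : nat) : \bar R :=
    ereal_sup [set ereal_inf [set (d x y)%:E | y in Y]
              | x in [set x | X x /\ (k <= size x)%N]].

Lemma AH_dir_inf d X Y : AH_dir d X Y = ereal_inf (range (useq d X Y)).
Proof.
rewrite /AH_dir; apply: cvg_lim => //.
apply: ereal_nonincreasing_cvgn => n m nm.
apply: ereal_sup_le => _ [x [Xx sx] <-]; exists x => //; split => //.
exact: leq_trans sx.
Qed.

Lemma AH_dir_ge (d : word S -> word S -> R) (X Y : set (word S)) (c : R) :
  (forall k, exists x, [/\ X x, (k <= size x)%N & forall y, Y y -> (c <= d x y)%R]) ->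
  c%:E <= AH_dir d X Y.
Proof.
move=> H; rewrite AH_dir_inf; apply: le_ereal_inf_tmp => _ [k _ <-].
have [x [Xx sx Hx]] := H k.
apply: le_trans (ereal_sup_ubound _); last by exists x.
apply: le_ereal_inf_tmp => _ [y Yy <-]; rewrite lee_fin; exact: Hx.
Qed.

Lemma AH_dir_le (d : word S -> word S -> R) (X Y : set (word S)) (c : R) (K : nat) :
  (forall x, X x -> (K <= size x)%N -> exists y, Y y /\ (d x y <= c)%R) ->
  AH_dir d X Y <= c%:E.
Proof.
move=> H; rewrite AH_dir_inf.
have : range (useq d X Y) (useq d X Y K) by exists K.
move=> /ereal_inf_lbound /le_trans; apply.
apply: ge_ereal_sup => _ [x [Xx sx] <-].
have [y [Yy le]] := H x Xx sx.
have : [set (d x y0)%:E | y0 in Y] (d x y)%:E by exists y.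
move=> /ereal_inf_lbound /le_trans; apply; by rewrite lee_fin.
Qed.

End AHlemmas.

End Part1.
Import Part1.

Module Part2.

Section Comb.
Variables (R : realType) (S : finType).
Implicit Types (x y u v : word S) (p : seq (edop S)).

Lemma key_count (a : S) p : all (@valid_op S) p -> all (pred1 a) (pmap id (unzip2 p)) ->
  (size p <= wgt p + count (pred1 a) (pmap id (unzip1 p)))%N.
Proof.
elim: p => [|o p IH] //=; case: o => o1 o2 /= /andP[vo vp].
case: o1 vo => [c|]; case: o2 => [d|] //= _.
- move=> /andP[/eqP da ap]; have := IH vp ap; rewrite /wgt /=.
  case: (eqVneq c a) => [->|ca]; rewrite ?da ?eqxx /=; first lia.
  have -> : (Some c != Some a) by apply/eqP => -[]; apply/eqP.
  lia.
- move=> ap; have := IH vp ap; rewrite /wgt /=; lia.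
- move=> /andP[_ ap]; have := IH vp ap; rewrite /wgt /=; lia.
Qed.

Lemma size_pmap_le (s : seq (option S)) : (size (pmap id s) <= size s)%N.
Proof. by rewrite size_pmap count_size. Qed.

Lemma key_bound (a : S) x y p : is_edit_path x y p -> all (pred1 a) y ->
  [/\ (size p <= wgt p + count (pred1 a) x)%N, (size x <= size p)%N & (size y <= size p)%N].
Proof.
move=> [vp ex ey] ay; split.
- by rewrite -ex; apply: key_count => //; rewrite ey.
- by rewrite -ex (leq_trans (size_pmap_le _)) // size_map.
- by rewrite -ey (leq_trans (size_pmap_le _)) // size_map.
Qed.

Lemma wgt0_eq x y p : is_edit_path x y p -> wgt p = 0%N -> x = y.
Proof.
move=> [_ <- <-]; rewrite /wgt => /eqP; rewrite -leqn0 leqNgt -has_count => /hasPn H.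
suff -> : unzip1 p = unzip2 p by [].
apply/eq_in_map => o /H; by rewrite negbK => /eqP.
Qed.

Lemma ed_path x y : exists p, is_edit_path x y p /\ wgt p = ed x y.
Proof.
rewrite /ed; case: ex_minnP => m /asboolP [p [H1 H2]] _; by exists p.
Qed.

Lemma ed_le x y p : is_edit_path x y p -> (ed x y <= wgt p)%N.
Proof.
move=> H; rewrite /ed; case: ex_minnP => m _; apply; apply/asboolP; by exists p.
Qed.

Lemma ed_eq1 x y p : x != y -> is_edit_path x y p -> (wgt p <= 1)%N -> ed x y = 1%N.
Proof.
move=> xy H w1; have le1 := leq_trans (ed_le H) w1.
have [q [Hq wq]] := ed_path x y.
have : ed x y != 0%N.
  apply/eqP => e0; move: xy; rewrite (wgt0_eq Hq) ?eqxx //; by rewrite wq.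
lia.
Qed.


Definition mism (u v : word S) : nat := count (fun c => c.1 != c.2) (zip u v).
Definition mpath (u v : word S) : seq (edop S) :=
  [seq ((Some c.1, Some c.2) : edop S) | c <- zip u v].

Lemma path_nil : is_edit_path (S:=S) [::] [::] [::].
Proof. by []. Qed.

Lemma path_cons x y p (o : edop S) : is_edit_path x y p -> valid_op o ->
  is_edit_path (pmap id [:: o.1] ++ x) (pmap id [:: o.2] ++ y) (o :: p).
Proof.
move=> [vp ex ey] vo; split; first by rewrite /= vo vp.
- by rewrite /= -ex; case: o.1.
- by rewrite /= -ey; case: o.2.
Qed.

Lemma path_cat x1 y1 p1 x2 y2 p2 : is_edit_path x1 y1 p1 -> is_edit_path x2 y2 p2 ->
  is_edit_path (x1 ++ x2) (y1 ++ y2) (p1 ++ p2).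
Proof.
move=> [v1 e1 f1] [v2 e2 f2]; split; first by rewrite all_cat v1 v2.
- by rewrite /unzip1 map_cat pmap_cat e1 e2.
- by rewrite /unzip2 map_cat pmap_cat f1 f2.
Qed.

Lemma wgt_cat p1 p2 : wgt (p1 ++ p2) = (wgt p1 + wgt p2)%N.
Proof. by rewrite /wgt count_cat. Qed.

Lemma mpath_ok u v : size u = size v ->
  [/\ is_edit_path u v (mpath u v), wgt (mpath u v) = mism u v & size (mpath u v) = size u].
Proof.
elim: u v => [|c u IH] [|d v] //= [e]; have [H1 H2 H3] := IH v e.
split; last by rewrite H3.
- exact: (path_cons (o := (Some c, Some d)) H1).
- move: H2; rewrite /wgt /mism /= => ->; congr addn.
Qed.

Lemma mism_nil u : mism u u = 0%N.
Proof. by elim: u => //= c u; rewrite /mism /= eqxx. Qed.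

Definition delpath (w : word S) : seq (edop S) := [seq ((Some c, None) : edop S) | c <- w].

Lemma delpath_ok w : [/\ is_edit_path w [::] (delpath w), wgt (delpath w) = size w & size (delpath w) = size w].
Proof.
elim: w => [|c w [H1 H2 H3]] //=; split; last by rewrite H3.
- exact: (path_cons (o := (Some c, None)) H1).
- by rewrite /wgt /= -H2.
Qed.

Lemma wgt0_unzip p : wgt p = 0%N -> unzip1 p = unzip2 p.
Proof.
rewrite /wgt => /eqP; rewrite -leqn0 leqNgt -has_count => /hasPn H.
apply/eq_in_map => o /H; by rewrite negbK => /eqP.
Qed.

Lemma ed1_split u v : ed u v = 1%N -> exists s1 s2 (o : edop S), valid_op o /\  u = s1 ++ pmap id [:: o.1] ++ s2 /\ v = s1 ++ pmap id [:: o.2] ++ s2.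
Proof.
have [p [[vp <- <-] w]] := ed_path u v; rewrite -w => {w}.
elim: p vp => [|o p IH] //= /andP[vo vp].
rewrite /wgt /=; case: (eqVneq o.1 o.2) => [E|N] /=.
- move=> /IH [//|s1 [s2 [q' [vo' [E1 E2]]]]].
  exists (pmap id [:: o.1] ++ s1), s2, q'; split => //; split.
  + by rewrite -catA -E1; case: o.1.
  + by rewrite -catA -E2 E; case: o.2.
- move=> [/wgt0_unzip E]; exists [::], (pmap id (unzip1 p)), o; split => //; split.
  + by case: o.1.
  + by rewrite E; case: o.2.
Qed.

Lemma ed_sub (c d : S) v : c != d -> ed (c :: v) (d :: v) = 1%N.
Proof.
move=> cd; have [H1 H2 H3] := mpath_ok (erefl (size v)).
apply: (ed_eq1 _ (path_cons (o := (Some c, Some d)) H1 _)) => //.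
  by apply/eqP => -[] /eqP; rewrite (negbTE cd).
by rewrite /wgt /= -/(wgt _) H2 mism_nil addn0 leq_b1.
Qed.

Lemma ed_del (c : S) u : ed (c :: u) u = 1%N.
Proof.
have [H1 H2 H3] := mpath_ok (erefl (size u)).
apply: (ed_eq1 _ (path_cons (o := (Some c, None)) H1 _)) => //.
  by apply/eqP => /(congr1 size) /=; lia.
by rewrite /wgt /= -/(wgt _) H2 mism_nil.
Qed.

Lemma ed_ins (c : S) u : ed u (c :: u) = 1%N.
Proof.
have [H1 H2 H3] := mpath_ok (erefl (size u)).
apply: (ed_eq1 _ (path_cons (o := (None, Some c)) H1 _)) => //.
  by apply/eqP => /(congr1 size) /=; lia.
by rewrite /wgt /= -/(wgt _) H2 mism_nil.
Qed.

Lemma ed_cons (c : S) x y : ed x y = 1%N -> ed (c :: x) (c :: y) = 1%N.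
Proof.
move=> e1; have [p [Hp wp]] := ed_path x y.
apply: (ed_eq1 _ (path_cons (o := (Some c, Some c)) Hp _)) => //.
  apply/eqP => -[] E; subst y; move: e1.
  have [M1 M2 _] := mpath_ok (erefl (size x)).
  by have := ed_le M1; rewrite M2 mism_nil leqn0 => /eqP ->.
by rewrite /wgt /= eqxx -/(wgt _) wp e1.
Qed.

Definition ED1 := (fun u v : word S => ed u v == 1%N).

Lemma chain_map_cons (c : S) x s : path ED1 x s -> path ED1 (c :: x) (map (cons c) s).
Proof.
elim: s x => //= v s IH x /andP[/eqP e p]; rewrite /ED1 ed_cons //= IH //.
Qed.

Lemma subchain u v : size u = size v -> exists s, [/\ is_chain u v s,
  (size s <= mism u v)%N & all (fun w => size w == size u) s].
Proof.
elim: u v => [|c u IH] [|d v] //= => [_|[e]]; first by exists [::].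
have [s' [/andP[ps' /eqP ls'] ss' as']] := IH v e.
case: (eqVneq c d) => [<-|cd].
- exists (map (cons c) s'); split.
  + by rewrite /is_chain chain_map_cons //= last_map ls' eqxx.
  + by rewrite size_map /mism /= eqxx.
  + by rewrite all_map; apply: sub_all as' => w /=.
- exists (rcons (map (cons c) s') (d :: v)); split.
  + rewrite /is_chain rcons_path chain_map_cons //= last_map ls' last_rcons eqxx.
    by rewrite /ED1 ed_sub.
  + by rewrite size_rcons size_map /mism /= cd.
  + rewrite all_rcons all_map /= e eqxx /= -e; by apply: sub_all as' => w /=.
Qed.

Fixpoint delchain (u : word S) : seq (word S) :=
  if u is c :: u' then u' :: delchain u' else [::].
Fixpoint inschain (v : word S) : seq (word S) :=
  if v is c :: v' then rcons (inschain v') v else [::].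

Lemma delchain_ok u : path ED1 u (delchain u) /\ last u (delchain u) = [::].
Proof. elim: u => //= c u [H1 H2]; by rewrite /ED1 ed_del H1 H2. Qed.

Lemma inschain_ok v : path ED1 [::] (inschain v) /\ last [::] (inschain v) = v.
Proof.
elim: v => //= c v [H1 H2]; by rewrite rcons_path last_rcons H1 H2 /ED1 ed_ins.
Qed.

Lemma chain_ex x y : exists s, is_chain x y s.
Proof.
have [D1 D2] := delchain_ok x; have [I1 I2] := inschain_ok y.
exists (delchain x ++ inschain y); by rewrite /is_chain cat_path last_cat D2 D1 I1 I2 eqxx.
Qed.

End Comb.

Section Reals.
Variable R : realType.
Local Open Scope ring_scope.
Lemma R1 (p q f1 f2 : R) : 0 <= p -> 0 <= f1 <= 1 -> 0 <= f2 -> (q+f1)/(p+1) - (q+f2)/(p+1) <= 1/(p+1).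
Proof.
move=> p0 /andP[f10 f11] f20.
rewrite -mulrBl ler_pM2r ?invr_gt0; lra.
Qed.

Lemma R2 (p q f : R) : 0 <= q <= p -> 0 <= f <= 1 -> (q+f)/(p+1) - q/p <= 1/(p+1).
Proof.
move=> /andP[q0 qp] /andP[f0 f1].
have [p0|pn0] := eqVneq p 0; first subst p.
  rewrite (_ : q = 0); last lra.
  rewrite !add0r invr1 !mulr1 mul0r subr0; lra.
have pp : 0 < p by rewrite lt_def pn0 (le_trans q0 qp).
have -> : (q+f)/(p+1) - q/p = (p*f - q)/(p*(p+1)) by field; lra.
rewrite ler_pdivrMr; last by nra.
rewrite mulrA (_ : 1/(p+1) * p * (p+1) = p); [nra|field; lra].
Qed.

Lemma R3 (p q f : R) : 0 <= q <= p -> 0 <= f <= 1 -> q/p - (q+f)/(p+1) <= 1/(p+1).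
Proof.
move=> /andP[q0 qp] /andP[f0 f1].
have [p0|pn0] := eqVneq p 0; first subst p.
  rewrite (_ : q = 0) ?invr0 ?mulr0; last lra.
  rewrite !add0r invr1 !mulr1; lra.
have pp : 0 < p by rewrite lt_def pn0 (le_trans q0 qp).
have -> : q/p - (q+f)/(p+1) = (q - p * f)/(p*(p+1)) by field; lra.
rewrite ler_pdivrMr; last by nra.
rewrite mulrA (_ : 1/(p+1) * p * (p+1) = p); [nra|field; lra].
Qed.

End Reals.

End Part2.
Import Part2.

Module Part3.
Local Open Scope ring_scope.

Section Cost.
Variables (R : realType) (S : finType).
Implicit Types (x y u v : word S).

Lemma chain_cost_cons x v s : @chain_cost R S x (v :: s) =
  1 / (maxn (size x) (size v))%:R + @chain_cost R S v s.
Proof. by rewrite /chain_cost /= big_cons. Qed.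

Lemma chain_cost_nil x : @chain_cost R S x [::] = 0.
Proof. by rewrite /chain_cost /= big_nil. Qed.

Lemma chain_ub (L : nat) x s : (0 < L)%N -> all (fun w => L <= size w)%N (x :: s) ->
  @chain_cost R S x s <= (size s)%:R / L%:R.
Proof.
move=> L0; elim: s x => [|v s IH] x /=; first by rewrite chain_cost_nil mul0r.
move=> /andP[Lx /andP[Lv Ls]]; rewrite chain_cost_cons.
have -> : (size s).+1%:R / L%:R = 1 / L%:R + (size s)%:R / (L%:R : R).
  by rewrite -mulrDl -natr1 addrC.
apply: lerD; last by apply: IH; rewrite /= Lv.
rewrite !mul1r lef_pV2 ?posrE ?ltr0n //; last by rewrite (leq_trans L0) // leq_max Lx.
by rewrite ler_nat leq_max Lx.
Qed.

Variable a : S.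
Definition Phi (u : word S) : R := (count (predC1 a) u)%:R / (size u)%:R.

Lemma phi_step u v : ed u v = 1%N -> Phi u - Phi v <= 1 / (maxn (size u) (size v))%:R.
Proof.
move=> /ed1_split [s1 [s2 [[z1 z2] [vo [-> ->]]]]] /=.
set P := (size s1 + size s2)%N; set Q := (count (predC1 a) s1 + count (predC1 a) s2)%N.
have QP : (Q <= P)%N by rewrite /Q /P; apply: leq_add; apply: count_size.
have q0 : 0 <= (Q%:R : R) <= P%:R by rewrite ler0n ler_nat QP.
have bnd (b : bool) : 0 <= (b%:R : R) <= 1 by case: b; rewrite /= ?lexx ?ler01.
rewrite /Phi.
case: z1 vo => [c|]; case: z2 => [d|] //= _; rewrite !size_cat !count_cat /=.
- have -> : (size s1 + (size s2).+1)%N = (P + 1)%N by rewrite /P; lia.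
  have -> : (count (predC1 a) s1 + ((c != a) + count (predC1 a) s2))%N = (Q + (c != a))%N by rewrite /Q; lia.
  have -> : (count (predC1 a) s1 + ((d != a) + count (predC1 a) s2))%N = (Q + (d != a))%N by rewrite /Q; lia.
  rewrite maxnn (natrD _ P) !(natrD _ Q); apply: R1 => //.
- have -> : (size s1 + (size s2).+1)%N = (P + 1)%N by rewrite /P; lia.
  have -> : (count (predC1 a) s1 + ((c != a) + count (predC1 a) s2))%N = (Q + (c != a))%N by rewrite /Q; lia.
  rewrite -/P -/Q (maxn_idPl (leq_addr 1 P)) (natrD _ P) (natrD _ Q); apply: R2 => //; exact: bnd.
- have -> : (size s1 + (size s2).+1)%N = (P + 1)%N by rewrite /P; lia.
  have -> : (count (predC1 a) s1 + ((d != a) + count (predC1 a) s2))%N = (Q + (d != a))%N by rewrite /Q; lia.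
  rewrite -/P -/Q (maxn_idPr (leq_addr 1 P)) (natrD _ P) (natrD _ Q); apply: R3 => //; exact: bnd.
Qed.

Lemma chain_lb x s : path (@ED1 S) x s -> Phi x - Phi (last x s) <= @chain_cost R S x s.
Proof.
elim: s x => [|v s IH] x /=; first by rewrite subrr chain_cost_nil.
move=> /andP[/eqP e p]; rewrite chain_cost_cons.
have := phi_step e; have := IH v p; lra.
Qed.

End Cost.

End Part3.
Import Part3.

Module Part4.
Local Open Scope classical_set_scope.
Local Open Scope ring_scope.

Section Gen.
Variables (R : realType) (S : finType).
Implicit Types (x y u v : word S).

Lemma frac_le (x y z w : nat) : (0 < y)%N -> (0 < w)%N -> (x * w <= z * y)%N ->
  (x%:R / y%:R : R) <= z%:R / w%:R.
Proof.
move=> y0 w0 H; rewrite ler_pdivrMr ?ltr0n // mulrAC ler_pdivlMr ?ltr0n //.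
by rewrite -!natrM ler_nat.
Qed.

Lemma ned_le x y p : is_edit_path x y p -> @ned R S x y <= (wgt p)%:R / (size p)%:R.
Proof.
move=> H; rewrite /ned; case: ifP => _; first by rewrite divr_ge0.
apply: ge_inf; last by exists p.
by exists 0 => _ [q _ <-]; rewrite divr_ge0.
Qed.

Lemma ned_ge x y (c : R) : ~~ ((x == [::]) && (y == [::])) ->
  (forall p, is_edit_path x y p -> c <= (wgt p)%:R / (size p)%:R) -> c <= @ned R S x y.
Proof.
move=> ne H; rewrite /ned (negbTE ne); apply: lb_le_inf.
  by have [p [Hp _]] := ed_path x y; exists ((wgt p)%:R / (size p)%:R); exists p.
by move=> _ [p Hp <-]; apply: H.
Qed.

Lemma chain_cost_ge0 x s : 0 <= @chain_cost R S x s.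
Proof. by rewrite /chain_cost; apply: sumr_ge0 => i _; rewrite divr_ge0. Qed.

Lemma ced_le x y s : is_chain x y s -> @ced R S x y <= @chain_cost R S x s.
Proof.
move=> H; rewrite /ced; apply: ge_inf; last by exists s.
by exists 0 => _ [q _ <-]; apply: chain_cost_ge0.
Qed.

Lemma ced_ge x y (c : R) :
  (forall s, is_chain x y s -> c <= @chain_cost R S x s) -> c <= @ced R S x y.
Proof.
move=> H; rewrite /ced; apply: lb_le_inf.
  by have [s Hs] := chain_ex x y; exists (chain_cost R x s); exists s.
by move=> _ [s Hs <-]; apply: H.
Qed.

End Gen.

End Part4.
Import Part4.

Module Part5.
Local Open Scope classical_set_scope.
Local Open Scope ring_scope.

Section Words.
Variables (R : realType) (S : finType) (a b : S).
Hypothesis ab : a != b.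

Definition Yw (i m : nat) : word S := flatten (nseq m (rcons (nseq i a) b)).

Lemma kstar_a x : kstar [:: a] x <-> exists n, x = nseq n a.
Proof.
have E n : flatten (nseq n [:: a]) = nseq n a by elim: n => //= n ->.
by split => -[n ->]; exists n; rewrite E.
Qed.

Lemma kstar_Y i y : kstar (rcons (nseq i a) b) y <-> exists m, y = Yw i m.
Proof. by []. Qed.

Lemma count_Y (P : pred S) i m : count P (Yw i m) = (m * count P (rcons (nseq i a) b))%N.
Proof. by elim: m => //= m IH; rewrite count_cat -/(Yw i m) IH mulSn. Qed.

Lemma size_Y i m : size (Yw i m) = (m * i.+1)%N.
Proof.
by rewrite -(count_predT (Yw i m)) count_Y count_predT size_rcons size_nseq.
Qed.

Lemma cnt_nona_Y i m : count (predC1 a) (Yw i m) = m.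
Proof.
rewrite count_Y -cats1 count_cat count_nseq /= eqxx /= eq_sym ab; lia.
Qed.

Lemma cnt_a_Y i m : count (pred1 a) (Yw i m) = (m * i)%N.
Proof.
rewrite count_Y -cats1 count_cat count_nseq /= eqxx /= eq_sym (negbTE ab); lia.
Qed.

Lemma all_a n : all (pred1 a) (nseq n a).
Proof. by elim: n => //= n ->; rewrite eqxx. Qed.

Lemma mism_a u : mism u (nseq (size u) a) = count (predC1 a) u.
Proof. by elim: u => //= c u IH; rewrite /mism /= -/(mism _ _) IH. Qed.

Lemma mism_a' v : mism (nseq (size v) a) v = count (predC1 a) v.
Proof. by elim: v => //= c v IH; rewrite /mism /= -/(mism _ _) IH eq_sym. Qed.

Lemma Phi_a n : Phi R a (nseq n a) = 0.
Proof. by rewrite /Phi count_nseq /= eqxx mul0n mul0r. Qed.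


Lemma Yw_ne i m : (0 < m)%N -> Yw i m != [::].
Proof. by move=> m0; apply/eqP => /(congr1 size); rewrite size_Y /=; lia. Qed.

Lemma L1 i m n : (0 < m)%N -> (1%:R / (i.+1)%:R : R) <= @ned R S (Yw i m) (nseq n a).
Proof.
move=> m0; apply: ned_ge; first by rewrite (negbTE (Yw_ne i m0)).
move=> p Hp; have [k1 k2 k3] := key_bound Hp (all_a n).
rewrite cnt_a_Y in k1; rewrite size_Y in k2.
apply: frac_le => //; nia.
Qed.

Lemma ged_nat x y : @ged R S x y = if (x == [::]) && (y == [::]) then 0 else
  (2 * ed x y)%:R / (size x + size y + ed x y)%:R.
Proof. by rewrite /ged natrM !natrD. Qed.

Lemma L2 i m n : (0 < m)%N -> ((2%N)%:R / (2 * i + 3)%:R : R) <= @ged R S (Yw i m) (nseq n a).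
Proof.
move=> m0; rewrite ged_nat (negbTE (Yw_ne i m0)) /=.
have [p [Hp wp]] := ed_path (Yw i m) (nseq n a).
have [k1 k2 k3] := key_bound Hp (all_a n).
rewrite cnt_a_Y wp in k1; rewrite size_Y in k2 *; rewrite size_nseq in k3 *.
apply: frac_le => //; [lia | nia | ].
have [nL|Ln] := leqP n (m * i.+1); nia.
Qed.

Lemma Phi_Y i m : (0 < m)%N -> Phi R a (Yw i m) = 1%:R / (i.+1)%:R.
Proof.
move=> m0; rewrite /Phi cnt_nona_Y size_Y natrM; field.
by rewrite pnatr_eq0 -lt0n m0 andbT addrC natr1 pnatr_eq0.
Qed.

Lemma L3 i m n : (0 < m)%N -> (1%:R / (i.+1)%:R : R) <= @ced R S (Yw i m) (nseq n a).
Proof.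
move=> m0; apply: ced_ge => s /andP[ps /eqP ls].
have := chain_lb R a ps; by rewrite ls Phi_a Phi_Y // subr0.
Qed.

Lemma U1 j m : (0 < m)%N -> @ned R S (Yw j m) (nseq (size (Yw j m)) a) <= 1%:R / (j.+1)%:R.
Proof.
move=> m0; have [H1 H2 H3] := mpath_ok (esym (size_nseq (size (Yw j m)) a)).
apply: le_trans (ned_le R H1) _; rewrite H2 H3 mism_a cnt_nona_Y size_Y.
apply: frac_le => //; nia.
Qed.

Lemma U2 j m : (0 < m)%N -> @ged R S (Yw j m) (nseq (size (Yw j m)) a) <= (2%N)%:R / (2 * j + 3)%:R.
Proof.
move=> m0; rewrite ged_nat (negbTE (Yw_ne j m0)) /=.
have [H1 H2 H3] := mpath_ok (esym (size_nseq (size (Yw j m)) a)).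
have := ed_le H1; rewrite H2 mism_a cnt_nona_Y size_nseq size_Y => e.
apply: frac_le => //; nia.
Qed.

Lemma U3 j m : (0 < m)%N -> @ced R S (Yw j m) (nseq (size (Yw j m)) a) <= 1%:R / (j.+1)%:R.
Proof.
move=> m0; have [s [Hs ss as_]] := subchain (esym (size_nseq (size (Yw j m)) a)).
apply: le_trans (ced_le R Hs) _.
have h1 : (0 < size (Yw j m))%N by rewrite size_Y; nia.
have h2 : all (fun w => size (Yw j m) <= size w)%N (Yw j m :: s).
  rewrite /= leqnn /=; by apply: sub_all as_ => w /eqP ->.
apply: le_trans (chain_ub R h1 h2) _.
rewrite mism_a cnt_nona_Y in ss; rewrite size_Y; apply: frac_le => //; nia.
Qed.

Fixpoint achain (L r : nat) : seq (word S) :=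
  if r is r'.+1 then nseq (L + r') a :: achain L r' else [::].

Lemma achain_ok L r : [/\ path (@ED1 S) (nseq (L + r) a) (achain L r),
  last (nseq (L + r) a) (achain L r) = nseq L a, size (achain L r) = r &
  all (fun w => L <= size w)%N (achain L r)].
Proof.
elim: r => [|r [H1 H2 H3 H4]] /=; first by rewrite addn0.
rewrite H1 H2 H3 H4 size_nseq leq_addr addnS /= /ED1 ed_del; split => //.
Qed.

Section V.
Variables (j m r : nat).
Hypotheses (j0 : (0 < j)%N) (rj : (r <= j)%N) (mj : (2 * j * j.+1 <= m)%N).
Let L := size (Yw j m).
Let LE : L = (m * j.+1)%N. Proof. exact: size_Y. Qed.

Let xpath : exists p, [/\ is_edit_path (nseq (L + r) a) (Yw j m) p,
   wgt p = (m + r)%N & size p = (L + r)%N].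
Proof.
have [H1 H2 H3] := mpath_ok (size_nseq L a).
have [D1 D2 D3] := delpath_ok (nseq r a).
exists (mpath (nseq L a) (Yw j m) ++ delpath (nseq r a)); split.
- by rewrite nseqD; have := path_cat H1 D1; rewrite cats0.
- by rewrite wgt_cat H2 D2 mism_a' cnt_nona_Y size_nseq.
- by rewrite size_cat H3 D3 !size_nseq.
Qed.

Lemma V1 : @ned R S (nseq (L + r) a) (Yw j m) <= (2 * j + 1)%:R / (2 * j * j.+1)%:R.
Proof.
have [p [Hp wp sp]] := xpath; apply: le_trans (ned_le R Hp) _.
rewrite wp sp LE; apply: frac_le; nia.
Qed.

Lemma V2 : @ged R S (nseq (L + r) a) (Yw j m) <= 1%:R / (j.+1)%:R.
Proof.
have [p [Hp wp sp]] := xpath; have e := ed_le Hp.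
rewrite wp in e; rewrite ged_nat.
case: ifP => _; first by rewrite divr_ge0.
rewrite size_nseq -/L; rewrite LE in e *; apply: frac_le => //; nia.
Qed.

Lemma V3 : @ced R S (nseq (L + r) a) (Yw j m) <= (2 * j + 1)%:R / (2 * j * j.+1)%:R.
Proof.
have [A1 A2 A3 A4] := achain_ok L r.
have [s [/andP[ps /eqP ls] ss as_]] := subchain (size_nseq L a).
have Hc : is_chain (nseq (L + r) a) (Yw j m) (achain L r ++ s).
  by rewrite /is_chain cat_path last_cat A1 A2 ps ls eqxx.
apply: le_trans (ced_le R Hc) _.
have h1 : (0 < L)%N by rewrite LE; nia.
have h2 : all (fun w => L <= size w)%N (nseq (L + r) a :: achain L r ++ s).
  rewrite /= size_nseq leq_addr all_cat A4 /=.
  by apply: sub_all as_ => w /eqP ->; rewrite size_nseq.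
apply: le_trans (chain_ub R h1 h2) _.
rewrite size_cat A3; move: ss; rewrite mism_a' cnt_nona_Y => ss.
rewrite LE; apply: frac_le; nia.
Qed.

End V.

End Words.

End Part5.
Import Part5.

Module Part6.
Local Open Scope classical_set_scope.
Local Open Scope ring_scope.

Section Final.
Variables (R : realType) (S : finType) (a b : S).
Hypothesis ab : a != b.

Lemma assemble (d : word S -> word S -> R) (i j K : nat) (c v : R) :
  (forall m n, (0 < m)%N -> c <= d (Yw a b i m) (nseq n a)) ->
  (forall m, (0 < m)%N -> d (Yw a b j m) (nseq (size (Yw a b j m)) a) <= v) ->
  (forall n, (K <= n)%N -> exists m, d (nseq n a) (Yw a b j m) <= v) ->
  v < c ->
  (AH d (kstar [:: a]) (kstar (rcons (nseq j a) b))
     < AH d (kstar [:: a]) (kstar (rcons (nseq i a) b)))%E.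
Proof.
move=> Lo U1 U2 vc.
have H1 : (AH d (kstar [:: a]) (kstar (rcons (nseq j a) b)) <= v%:E)%E.
  rewrite /AH ge_max; apply/andP; split.
  - apply: (@AH_dir_le R S d _ _ v K) => x /kstar_a [n ->]; rewrite size_nseq => Kn.
    by have [m dm] := U2 n Kn; exists (Yw a b j m); split => //; exists m.
  - apply: (@AH_dir_le R S d _ _ v 1) => _ [m ->]; rewrite size_Y => m0.
    exists (nseq (size (Yw a b j m)) a); split; last by apply: U1; nia.
    by apply/kstar_a; eexists.
have H2 : (c%:E <= AH d (kstar [:: a]) (kstar (rcons (nseq i a) b)))%E.
  rewrite /AH le_max; apply/orP; right.
  apply: AH_dir_ge => k; exists (Yw a b i k.+1); split.
  - by exists k.+1.
  - by rewrite size_Y; nia.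
  - by move=> y /kstar_a [n ->]; apply: Lo.
apply: le_lt_trans H1 _; apply: lt_le_trans H2; by rewrite lte_fin.
Qed.

Lemma frac_lt (x y z w : nat) : (0 < y)%N -> (0 < w)%N -> (x * w < z * y)%N ->
  (x%:R / y%:R : R) < z%:R / w%:R.
Proof.
move=> y0 w0 H; rewrite ltr_pdivrMr ?ltr0n // mulrAC ltr_pdivlMr ?ltr0n //.
by rewrite -!natrM ltr_nat.
Qed.

Lemma split_n (j n : nat) : (0 < j)%N -> (2 * j * j.+1 * j.+1 <= n)%N ->
  exists m r, [/\ n = (size (Yw a b j m) + r)%N, (r <= j)%N & (2 * j * j.+1 <= m)%N].
Proof.
move=> j0 Kn; exists (n %/ j.+1)%N, (n %% j.+1)%N; split.
- by rewrite size_Y {1}(div.divn_eq n j.+1).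
- by rewrite -ltnS ltn_pmod.
- by rewrite leq_divRL.
Qed.

End Final.



End Part6.
Import Part6.

Local Open Scope ereal_scope.

Theorem mainTheorem9 (R : realType) (S : finType) (a b : S) :
  a != b ->
  forall i j : nat, (i < j)%N ->
    [/\ AH (@ned R S) (kstar [:: a]) (kstar (rcons (nseq j a) b))
          < AH (@ned R S) (kstar [:: a]) (kstar (rcons (nseq i a) b)),
        AH (@ged R S) (kstar [:: a]) (kstar (rcons (nseq j a) b))
          < AH (@ged R S) (kstar [:: a]) (kstar (rcons (nseq i a) b))
      & AH (@ced R S) (kstar [:: a]) (kstar (rcons (nseq j a) b))
          < AH (@ced R S) (kstar [:: a]) (kstar (rcons (nseq i a) b))].
Proof.
move=> ab i j ij; have j0 : (0 < j)%N by lia.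
split.
- apply: (assemble ab (K := (2 * j * j.+1 * j.+1)%N) (c := (1%:R / (i.+1)%:R)%R)
     (v := ((2 * j + 1)%:R / (2 * j * j.+1)%:R)%R)).
  + by move=> m n m0; apply: L1.
  + move=> m m0; apply: (le_trans (U1 R ab j m0)); apply: frac_le => //; nia.
  + move=> n Kn; have [m [r [-> rj mj]]] := split_n a b j0 Kn; exists m; exact: V1.
  + apply: frac_lt => //; nia.
- apply: (assemble ab (K := (2 * j * j.+1 * j.+1)%N) (c := ((2%N)%:R / (2 * i + 3)%:R)%R)
     (v := (1%:R / (j.+1)%:R)%R)).
  + by move=> m n m0; apply: L2.
  + move=> m m0; apply: (le_trans (U2 R ab j m0)); apply: frac_le => //; nia.
  + move=> n Kn; have [m [r [-> rj mj]]] := split_n a b j0 Kn; exists m; exact: V2.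
  + apply: frac_lt => //; nia.
- apply: (assemble ab (K := (2 * j * j.+1 * j.+1)%N) (c := (1%:R / (i.+1)%:R)%R)
     (v := ((2 * j + 1)%:R / (2 * j * j.+1)%:R)%R)).
  + by move=> m n m0; apply: L3.
  + move=> m m0; apply: (le_trans (U3 R ab j m0)); apply: frac_le => //; nia.
  + move=> n Kn; have [m [r [-> rj mj]]] := split_n a b j0 Kn; exists m; exact: V3.
  + apply: frac_lt => //; nia.
Qed.
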